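(* Let $\mathrm{M}=\langle e_1+I,\ e_2+I,\ A\rangle$, where $e_1,e_2$ are the standard basis vectors of $E^2$ and $A=\begin{pmatrix}0&1\\1&0\end{pmatrix}$ transposes $e_1$ and $e_2$. Then the Lie group $\mathrm{Sym}(\mathrm{M})$ is isomorphic to $\mathrm{O}(2)$, $\mathrm{Sym}(\mathrm{M})=\mathrm{Aff}(\mathrm{M})$, and $\Omega:\mathrm{Aff}(\mathrm{M})\to\mathrm{Out}(\mathrm{M})$ maps the subgroup $\{\mathrm{idt.}, (-I)_\star\}$ isomorphically onto $\mathrm{Out}(\mathrm{M})$.
   Context: Affine maps of $E^2$ are written $a+A$ ($x\mapsto a+Ax$); $a+I$ is translation by $a$. For a 2-space group $\mathrm{M}$, let $N_A(\mathrm{M})$ be its normalizer in the affine group of $E^2$. Each $a+A\in N_A(\mathrm{M})$ induces an affinity $(a+A)_\star:\mathrm{M}x\mapsto\mathrm{M}(a+Ax)$ of the flat orbifold $E^2/\mathrm{M}$; $\mathrm{Aff}(\mathrm{M})$ is the group of all such affinities, and $\mathrm{Sym}(\mathrm{M})=\mathrm{Isom}(E^2/\mathrm{M})$ is its subgroup of isometries of the flat orbifold $E^2/\mathrm{M}$ (a Lie group). idt. denotes the identity. $\Omega:\mathrm{Aff}(\mathrm{M})\to\mathrm{Out}(\mathrm{M})$ sends $(a+A)_\star$ to the outer automorphism class of $g\mapsto (a+A)g(a+A)^{-1}$ on $\mathrm{M}$. Here $E^2/\mathrm{M}$ is a Möbius band. *)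

(* Defs.v *)
From HB Require Import structures.
From mathcomp Require Import all_boot all_order all_algebra.
From mathcomp Require Import boolp classical_sets reals.
Set Implicit Arguments. Unset Strict Implicit. Unset Printing Implicit Defensive.
Import Order.TTheory GRing.Theory Num.Theory.
Local Open Scope ring_scope.
Local Open Scope classical_set_scope.

Section Affine.
Variable R : realType.

(* An affine map a + A of E^2 = R^2 (column vectors): x |-> a + A x. *)
Record aff := Aff { atr : 'cV[R]_2 ; alin : 'M[R]_2 }.

Definition app (f : aff) (x : 'cV[R]_2) : 'cV[R]_2 := atr f + alin f *m x.
Definition acomp (f g : aff) : aff :=
  Aff (atr f + alin f *m atr g) (alin f *m alin g).
Definition ainv (f : aff) : aff :=
  Aff (- (invmx (alin f) *m atr f)) (invmx (alin f)).
Definition aid : aff := Aff 0 1%:M.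
Definition aminusI : aff := Aff 0 (- 1%:M).
Definition is_affine (f : aff) : Prop := alin f \in unitmx.

Definition e1 : 'cV[R]_2 := \col_i (if val i == 0%N then 1 else 0).
Definition e2 : 'cV[R]_2 := \col_i (if val i == 1%N then 1 else 0).
Definition Aswap : 'M[R]_2 := \matrix_(i, j) (if i == j then 0 else 1).

Inductive inM : aff -> Prop :=
  | inM_e1 : inM (Aff e1 1%:M)
  | inM_e2 : inM (Aff e2 1%:M)
  | inM_A : inM (Aff 0 Aswap)
  | inM_id : inM aid
  | inM_comp f g : inM f -> inM g -> inM (acomp f g)
  | inM_inv f : inM f -> inM (ainv f).

Definition conjb (f m : aff) : aff := acomp (acomp f m) (ainv f).

Definition inNA (f : aff) : Prop :=
  is_affine f /\ forall m, inM m <-> inM (conjb f m).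

(* f_* = g_* as maps of E^2/M : M(f x) = M(g x) for all x *)
Definition same_star (f g : aff) : Prop :=
  forall x, exists m, inM m /\ app f x = app m (app g x).

(* Euclidean norm and the quotient metric of the flat orbifold E^2/M *)
Definition enorm (x : 'cV[R]_2) : R := Num.sqrt (\sum_i x i 0 ^+ 2).
Definition odist (x y : 'cV[R]_2) : R :=
  inf [set enorm (x - app g y) | g in inM].

Definition isometry_star (f : aff) : Prop :=
  forall x y, odist (app f x) (app f y) = odist x y.

(* representatives of Sym(M) = Isom(E^2/M) inside Aff(M) *)
Definition inSym (f : aff) : Prop := inNA f /\ isometry_star f.

(* uniform (compact-open) distance between f_* and g_* on the compact E^2/M *)
Definition supdist (f g : aff) : R :=
  sup [set odist (app f x) (app g x) | x in [set: 'cV[R]_2]].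

Definition is_autM (alpha : aff -> aff) : Prop :=
  [/\ forall m, inM m -> inM (alpha m),
      forall m1 m2, inM m1 -> inM m2 -> alpha (acomp m1 m2) = acomp (alpha m1) (alpha m2),
      forall m1 m2, inM m1 -> inM m2 -> alpha m1 = alpha m2 -> m1 = m2 &
      forall m, inM m -> exists m', inM m' /\ alpha m' = m].

Definition out_equiv (alpha beta : aff -> aff) : Prop :=
  exists g, inM g /\ forall m, inM m -> alpha m = conjb g (beta m).

End Affine.

(* Main.v *)
Require Import Defs.
From HB Require Import structures.
From mathcomp Require Import all_boot all_order all_algebra.
From mathcomp Require Import boolp classical_sets reals.
From mathcomp Require Import trigo.
From mathcomp Require Import zify ring lra.
Import Order.TTheory GRing.Theory Num.Theory.
Local Open Scope ring_scope.
Set Implicit Arguments. Unset Strict Implicit. Unset Printing Implicit Defensive.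
Section Dev.
Variable R : realType.
Local Notation aff := (aff R).
Local Notation inM := (@inM R).
Local Notation isint x := (x \is a Num.int).

Lemma ord2 (i : 'I_2) : i = 0 \/ i = 1.
Proof. case: i => [[|[|//]]] Hi; [left|right]; exact/val_inj. Qed.
Lemma mx2P (A B : 'M[R]_2) : A 0 0 = B 0 0 -> A 0 1 = B 0 1 -> A 1 0 = B 1 0 -> A 1 1 = B 1 1 -> A = B.
Proof.
move=> h00 h01 h10 h11; apply/matrixP => i j.
by case: (ord2 i) => ->; case: (ord2 j) => ->.
Qed.
Lemma cv2P (A B : 'cV[R]_2) : A 0 0 = B 0 0 -> A 1 0 = B 1 0 -> A = B.
Proof.
move=> h0 h1; apply/matrixP => i j.
by rewrite (ord1 j); case: (ord2 i) => ->.
Qed.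
Lemma mul2 m (A : 'M[R]_(m,2)) p (B : 'M[R]_(2,p)) i j : (A *m B) i j = A i 0 * B 0 j + A i 1 * B 1 j.
Proof. by rewrite mxE !big_ord_recl big_ord0 addr0; have -> : lift ord0 ord0 = 1 :> 'I_2 by apply: val_inj. Qed.

Lemma mxDv (a b : 'cV[R]_2) i : (a + b) i 0 = a i 0 + b i 0.
Proof. by rewrite mxE. Qed.
Lemma mxNv (a : 'cV[R]_2) i : (- a) i 0 = - a i 0.
Proof. by rewrite mxE. Qed.
Lemma mxBv (a b : 'cV[R]_2) i : (a - b) i 0 = a i 0 - b i 0.
Proof. by rewrite !mxE. Qed.

Definition sg (s : bool) : R := if s then -1 else 1.
Definition Psb (s b : bool) : 'M[R]_2 :=
  \matrix_(i, j) (sg s * (if b then (if i == j then 0 else 1) else (if i == j then 1 else 0))).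

Lemma Psb_ff : Psb false false = 1%:M.
Proof. by apply/mx2P; rewrite !mxE /sg /= ?mulr1 ?mulr0. Qed.
Lemma Psb_ft : Psb false true = Aswap R.
Proof. by apply/mx2P; rewrite !mxE /sg /= ?mulr1 ?mulr0. Qed.

Lemma sgM s t : sg s * sg t = sg (s (+) t).
Proof. by case: s; case: t; rewrite /sg /=; lra. Qed.

Lemma Psb_mul s b t c : Psb s b *m Psb t c = Psb (s (+) t) (b (+) c).
Proof.
by apply/mx2P; rewrite !mul2 !mxE /=;
case: s; case: t; case: b; case: c; rewrite /sg /=; lra.
Qed.

Lemma Psb_sq s b : Psb s b *m Psb s b = 1%:M.
Proof. by rewrite Psb_mul !addbb Psb_ff. Qed.

Lemma Psb_unit s b : Psb s b \in unitmx.
Proof. by have [] := mulmx1_unit (Psb_sq s b). Qed.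

Lemma Psb_inv s b : invmx (Psb s b) = Psb s b.
Proof.
have U := Psb_unit s b.
by rewrite -[RHS]mul1mx -(mulVmx U) -mulmxA Psb_sq mulmx1.
Qed.

Lemma Psbv0 s b (x : 'cV[R]_2) : (Psb s b *m x) 0 0 = sg s * (if b then x 1 0 else x 0 0).
Proof. by rewrite mul2 !mxE /=; case: b; rewrite /=; lra. Qed.
Lemma Psbv1 s b (x : 'cV[R]_2) : (Psb s b *m x) 1 0 = sg s * (if b then x 0 0 else x 1 0).
Proof. by rewrite mul2 !mxE /=; case: b; rewrite /=; lra. Qed.

Lemma isint_sg s : isint (sg s).
Proof. by case: s; rewrite /sg ?rpredN rpred1. Qed.

Lemma acompA (f g h : aff) : acomp (acomp f g) h = acomp f (acomp g h).
Proof. by case: f => a A; case: g => b B; case: h => c C; rewrite /acomp /= mulmxDr !mulmxA addrA. Qed.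
Lemma acomp1f (f : aff) : acomp (aid R) f = f.
Proof. by case: f => a A; rewrite /acomp /= !mul1mx add0r. Qed.
Lemma acompf1 (f : aff) : acomp f (aid R) = f.
Proof. by case: f => a A; rewrite /acomp /= mulmx0 addr0 mulmx1. Qed.
Lemma acompV (f : aff) : alin f \in unitmx -> acomp f (ainv f) = aid R.
Proof.
case: f => a A /= U; rewrite /acomp /ainv /aid /= mulmxN mulmxA (mulmxV U) mul1mx subrr.
done.
Qed.
Lemma acompVf (f : aff) : alin f \in unitmx -> acomp (ainv f) f = aid R.
Proof.
case: f => a A /= U; rewrite /acomp /ainv /aid /= (mulVmx U) addrC subrr.
done.
Qed.
Lemma ainvK (f : aff) : alin f \in unitmx -> ainv (ainv f) = f.
Proof.
case: f => a A /= U; rewrite /ainv /= invmxK mulmxN mulmxA (mulmxV U) mul1mx opprK //.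
Qed.
Lemma unit_ainv (f : aff) : alin f \in unitmx -> alin (ainv f) \in unitmx.
Proof. by move=> U; rewrite /= unitmx_inv. Qed.
Lemma unit_acomp (f g : aff) : alin f \in unitmx -> alin g \in unitmx -> alin (acomp f g) \in unitmx.
Proof. by move=> Uf Ug; rewrite /= unitmx_mul Uf Ug. Qed.
Lemma app_acomp (f g : aff) x : app (acomp f g) x = app f (app g x).
Proof. by rewrite /app /acomp /= mulmxDr mulmxA addrA. Qed.
Lemma app_aid x : app (aid R) x = x.
Proof. by rewrite /app /= mul1mx add0r. Qed.

Lemma conjbE (a b : 'cV[R]_2) (A B : 'M[R]_2) : A \in unitmx ->
  conjb (Aff a A) (Aff b B) = Aff (a + A *m b - (A *m B *m invmx A) *m a) (A *m B *m invmx A).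
Proof.
move=> U; rewrite /conjb /acomp /ainv /=.
by rewrite mulmxN !mulmxA.
Qed.

Definition Mform (m : aff) : Prop :=
  isint (atr m 0 0) /\ isint (atr m 1 0) /\ exists b, alin m = Psb false b.

Lemma e1E : (e1 R) 0 0 = 1 /\ (e1 R) 1 0 = 0.
Proof. by rewrite !mxE. Qed.
Lemma e2E : (e2 R) 0 0 = 0 /\ (e2 R) 1 0 = 1.
Proof. by rewrite !mxE. Qed.

Lemma inM_Mform m : inM m -> Mform m.
Proof.
elim=> {m}.
- by rewrite /Mform /= !mxE /= rpred1 rpred0; split=> //; split=> //; exists false; rewrite Psb_ff.
- by rewrite /Mform /= !mxE /= rpred1 rpred0; split=> //; split=> //; exists false; rewrite Psb_ff.
- by rewrite /Mform /= !mxE /= rpred0; split=> //; split=> //; exists true; rewrite Psb_ft.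
- by rewrite /Mform /= !mxE /= rpred0; split=> //; split=> //; exists false; rewrite Psb_ff.
- move=> [a A] [b B] _ [ha0 [ha1 [c /= ->]]] _ [hb0 [hb1 [d /= ->]]].
  rewrite /Mform /= in ha0 ha1 hb0 hb1 *; rewrite !mxDv Psbv0 Psbv1; split; last split.
  + by rewrite rpredD // rpredM ?isint_sg //; case: c.
  + by rewrite rpredD // rpredM ?isint_sg //; case: c.
  + by exists (c (+) d); rewrite Psb_mul.
- move=> [a A] _ [ha0 [ha1 [c /= ->]]].
  rewrite /Mform /= in ha0 ha1 *; rewrite Psb_inv !mxNv Psbv0 Psbv1; split; last split.
  + by rewrite rpredN rpredM ?isint_sg //; case: c.
  + by rewrite rpredN rpredM ?isint_sg //; case: c.
  + by exists c.
Qed.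

Definition trans (v : 'cV[R]_2) : aff := Aff v 1%:M.

Lemma inM_transD v w : inM (trans v) -> inM (trans w) -> inM (trans (v + w)).
Proof.
move=> hv hw; have := inM_comp hv hw.
by rewrite /acomp /trans /= !mul1mx.
Qed.
Lemma inM_transN v : inM (trans v) -> inM (trans (- v)).
Proof.
move=> hv; have := inM_inv hv.
by rewrite /ainv /trans /= invmx1 mul1mx.
Qed.
Lemma inM_trans0 : inM (trans 0).
Proof. exact: inM_id. Qed.

Lemma inM_transZ (v : 'cV[R]_2) (z : int) : inM (trans v) -> inM (trans (z%:~R *: v)).
Proof.
move=> hv.
have hn : forall n : nat, inM (trans (n%:R *: v)).
  elim=> [|n IH]; first by rewrite scale0r; exact: inM_trans0.
  by rewrite -natr1 scalerDl scale1r addrC; apply: inM_transD.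
case: z => n; first by rewrite -pmulrn; exact: hn.
by rewrite NegzE mulrNz scaleNr; apply: inM_transN; rewrite -pmulrn; exact: hn.
Qed.

Lemma Mform_inM m : Mform m -> inM m.
Proof.
case: m => a A [/intrP [z0 /= h0] [/intrP [z1 /= h1] [b /= hA]]].
have ht : inM (trans a).
  have -> : a = z0%:~R *: e1 R + z1%:~R *: e2 R.
    by apply/cv2P; rewrite !mxE /= ?h0 ?h1; lra.
  by apply: inM_transD; apply: inM_transZ; [exact: inM_e1 | exact: inM_e2].
have hB : inM (Aff 0 A).
  by rewrite hA; case: (b); [rewrite Psb_ft; exact: inM_A | rewrite Psb_ff; exact: inM_id].
have := inM_comp ht hB.
by rewrite /acomp /trans /= mulmx0 addr0 mul1mx.
Qed.

Lemma inME m : inM m <-> Mform m.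
Proof. by split; [exact: inM_Mform | exact: Mform_inM]. Qed.


Lemma isint_eq (x y : R) : y = x -> isint y -> isint x.
Proof. by move=> ->. Qed.

Ltac intclose := repeat first [assumption | apply: rpredD | rewrite rpredN | apply: rpred0].
Ltac intcomb x y d :=
  first [ apply: (@isint_eq _ (x)); [lra | intclose]
        | apply: (@isint_eq _ (- x)); [lra | intclose]
        | apply: (@isint_eq _ (y)); [lra | intclose]
        | apply: (@isint_eq _ (- y)); [lra | intclose]
        | apply: (@isint_eq _ (x + d)); [lra | intclose]
        | apply: (@isint_eq _ (- x + d)); [lra | intclose]
        | apply: (@isint_eq _ (y + d)); [lra | intclose]
        | apply: (@isint_eq _ (- y + d)); [lra | intclose]
        | apply: (@isint_eq _ (x - d)); [lra | intclose]
        | apply: (@isint_eq _ (- x - d)); [lra | intclose]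
        | apply: (@isint_eq _ (y - d)); [lra | intclose]
        | apply: (@isint_eq _ (- y - d)); [lra | intclose]
        | apply: (@isint_eq _ (d)); [lra | intclose]
        | apply: (@isint_eq _ (- d)); [lra | intclose]
        | apply: (@isint_eq _ 0); [lra | intclose] ].

Definition NAform (f : aff) : Prop :=
  exists s b, alin f = Psb s b /\ isint (atr f 0 0 - atr f 1 0).

Lemma NAform_fwd (f m : aff) : NAform f -> inM m -> inM (conjb f m).
Proof.
case: f => v L [s [b [/= -> hd]]].
case: m => a B /inME [/= ha0 [/= ha1 [c /= ->]]].
rewrite conjbE ?Psb_unit // Psb_inv !Psb_mul.
have -> : s (+) false (+) s = false by case: s.
have -> : b (+) c (+) b = c by case: b; case: c.
apply/inME; rewrite /Mform /= !mxBv !mxDv !Psbv0 !Psbv1; split; last split; last by exists c.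
- by case: s b c hd => [] [] [] hd; rewrite /sg /=; intcomb (a 0 0) (a 1 0) (v 0 0 - v 1 0).
- by case: s b c hd => [] [] [] hd; rewrite /sg /=; intcomb (a 0 0) (a 1 0) (v 0 0 - v 1 0).
Qed.

Lemma NAform_inv (f : aff) : NAform f -> NAform (ainv f).
Proof.
case: f => v L [s [b [/= -> hd]]]; exists s, b; rewrite /= Psb_inv; split=> //.
rewrite !mxNv !Psbv0 !Psbv1.
by case: s b hd => [] [] hd; rewrite /sg /=; intcomb (v 0 0) (v 1 0) (v 0 0 - v 1 0).
Qed.

Lemma NAform_unit (f : aff) : NAform f -> alin f \in unitmx.
Proof. by case=> s [b [-> _]]; exact: Psb_unit. Qed.

Lemma conjbK (f m : aff) : alin f \in unitmx -> conjb (ainv f) (conjb f m) = m.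
Proof.
move=> U; rewrite /conjb ainvK // !acompA acompVf // acompf1 -acompA acompVf // acomp1f //.
Qed.

Lemma NAform_inNA (f : aff) : NAform f -> inNA f.
Proof.
move=> hf; split; first exact: NAform_unit.
move=> m; split; first exact: NAform_fwd.
move=> h; rewrite -(conjbK m (NAform_unit hf)).
exact: NAform_fwd (NAform_inv hf) h.
Qed.

Lemma int_mul_eq1 (z w : int) : z * w = 1 -> z = 1 \/ z = -1.
Proof.
move=> h; have /eqP := congr1 absz h; rewrite abszM muln_eq1 => /andP[/eqP hz _].
lia.
Qed.

Lemma inNA_NAform (f : aff) : inNA f -> NAform f.
Proof.
case: f => v L [/= U hN]; rewrite /is_affine /= in U.
have c1 : forall w : 'cV[R]_2, conjb (Aff v L) (Aff w 1%:M) = Aff (L *m w) 1%:M.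
  move=> w; rewrite conjbE // mulmx1 (mulmxV U) mul1mx.
  by congr Aff; rewrite addrC addKr.
have he1 := (hN _).1 (inM_e1 R); rewrite c1 in he1.
have he2 := (hN _).1 (inM_e2 R); rewrite c1 in he2.
move/inME: he1 => [/= h00 [h10 _]]; move/inME: he2 => [/= h01 [h11 _]].
rewrite !mul2 !mxE /= in h00 h10 h01 h11.
have hA := (hN _).1 (inM_A R); rewrite conjbE // in hA.
move/inME: hA => [/= hA0 [hA1 [c hc]]].
have hcA : L *m Aswap R *m invmx L = Aswap R.
  case: c hc => hc; first by rewrite Psb_ft in hc.
  rewrite Psb_ff in hc.
  have : L *m Aswap R = L by rewrite -[LHS]mulmx1 -(mulVmx U) !mulmxA hc mul1mx.
  move=> h; have : invmx L *m (L *m Aswap R) = invmx L *m L by rewrite h.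
  rewrite mulmxA (mulVmx U) mul1mx => /matrixP /(_ 0 0); rewrite !mxE /=.
  by move=> /esym/eqP; rewrite oner_eq0.
have LA : L *m Aswap R = Aswap R *m L.
  by rewrite -[in RHS]hcA -!mulmxA (mulVmx U) mulmx1.
have LAE := LA; move/matrixP: LA => LA.
have hp : L 1 1 = L 0 0.
  by have := LA 0 1; rewrite !mul2 !mxE /=; lra.
have hq : L 1 0 = L 0 1.
  by have := LA 0 0; rewrite !mul2 !mxE /=; lra.
rewrite hcA mulmx0 addr0 in hA0.
rewrite !mxBv !mul2 !mxE /= in hA0.
have hd : isint (v 0 0 - v 1 0) by apply: (isint_eq _ hA0); lra.
pose Li := invmx L.
have c2 : forall w : 'cV[R]_2, conjb (Aff v L) (Aff (Li *m w) 1%:M) = Aff w 1%:M.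
  by move=> w; rewrite c1 mulmxA (mulmxV U) mul1mx.
have hi1 := (hN _).2; have hi2 := (hN _).2.
move: (hi1 (Aff (Li *m e1 R) 1%:M)); rewrite c2 => /(_ (inM_e1 R)) /inME [/= g00 [g10 _]].
move: (hi2 (Aff (Li *m e2 R) 1%:M)); rewrite c2 => /(_ (inM_e2 R)) /inME [/= g01 [g11 _]].
rewrite !mul2 !mxE /= in g00 g10 g01 g11.
have LLi := mulmxV U; move/matrixP: LLi => LLi.
have E00 := LLi 0 0; have E10 := LLi 1 0.
rewrite !mul2 !mxE /= in E00 E10.
rewrite ?mulr1 ?mulr0 ?addr0 ?add0r in h00 h01 g00 g10.
move: h00 h01 g00 g10 => /intrP[zp hzp] /intrP[zq hzq] /intrP[x0 hx0] /intrP[x1 hx1].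
rewrite hp hq in E10.
have k1 : (zp + zq) * (x0 + x1) = 1.
  apply: (@intr_inj R); rewrite intrM !intrD -hzp -hzq -hx0 -hx1 /=; nra.
have k2 : (zp - zq) * (x0 - x1) = 1.
  apply: (@intr_inj R); rewrite intrM !intrB -hzp -hzq -hx0 -hx1 /=; nra.
have := int_mul_eq1 k1; have := int_mul_eq1 k2 => j2 j1.
have : (zp = 1 /\ zq = 0) \/ (zp = 0 /\ zq = 1) \/ (zp = -1 /\ zq = 0) \/ (zp = 0 /\ zq = -1) by lia.
have fin : forall s b, L 0 0 = sg s * (if b then 0 else 1) -> L 0 1 = sg s * (if b then 1 else 0) ->
  NAform (Aff v L).
  move=> s b e0 e1; exists s, b; split=> //=.
  by apply/mx2P; rewrite !mxE /= ?hp ?hq ?e0 ?e1.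
case=> [[u0 u1]|[[u0 u1]|[[u0 u1]|[u0 u1]]]].
- by apply: (fin false false); rewrite ?hzp ?hzq ?u0 ?u1 /sg /= ?mulrNz; lra.
- by apply: (fin false true); rewrite ?hzp ?hzq ?u0 ?u1 /sg /= ?mulrNz; lra.
- by apply: (fin true false); rewrite ?hzp ?hzq ?u0 ?u1 /sg /= ?mulrNz; lra.
- by apply: (fin true true); rewrite ?hzp ?hzq ?u0 ?u1 /sg /= ?mulrNz; lra.
Qed.

Lemma enormE (x : 'cV[R]_2) : enorm x = Num.sqrt (x 0 0 ^+ 2 + x 1 0 ^+ 2).
Proof.
by rewrite /enorm !big_ord_recl big_ord0 addr0; have -> : lift ord0 ord0 = 1 :> 'I_2 by apply: val_inj.
Qed.

Lemma enorm_Psb s b (w : 'cV[R]_2) : enorm (Psb s b *m w) = enorm w.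
Proof.
rewrite !enormE Psbv0 Psbv1; congr Num.sqrt.
by case: s; case: b; rewrite /sg /=; ring.
Qed.

Lemma app_diff (f : aff) x y : app f x - app f y = alin f *m (x - y).
Proof. by rewrite /app mulmxBr opprD addrACA subrr add0r. Qed.

Lemma appVK (f : aff) y : alin f \in unitmx -> app (ainv f) (app f y) = y.
Proof. by move=> U; rewrite -app_acomp acompVf // app_aid. Qed.
Lemma appKV (f : aff) y : alin f \in unitmx -> app f (app (ainv f) y) = y.
Proof. by move=> U; rewrite -app_acomp acompV // app_aid. Qed.

Lemma app_conjb (f g : aff) y : alin f \in unitmx ->
  app (conjb f g) (app f y) = app f (app g y).
Proof. by move=> U; rewrite /conjb !app_acomp appVK. Qed.

Lemma NAform_iso (f : aff) : NAform f -> isometry_star f.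
Proof.
move=> hf x y; have U := NAform_unit hf.
have [s [b [hL _]]] := hf.
rewrite /odist; congr inf; apply/seteqP; split => r [g hg <-].
- exists (conjb (ainv f) g); first exact: NAform_fwd (NAform_inv hf) hg.
  have -> : app (conjb (ainv f) g) y = app (ainv f) (app g (app f y)).
    by rewrite -{1}(appVK y U) app_conjb // unit_ainv.
  by rewrite -(enorm_Psb s b) -hL -app_diff appKV.
- exists (conjb f g); first exact: NAform_fwd hf hg.
  by rewrite app_conjb // app_diff hL enorm_Psb.
Qed.

Lemma part2 (f : aff) : inNA f -> isometry_star f.
Proof. by move=> /inNA_NAform; exact: NAform_iso. Qed.


Lemma Mform_unit (m : aff) : inM m -> alin m \in unitmx.
Proof. by move=> /inME [_ [_ [c ->]]]; exact: Psb_unit. Qed.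

Lemma conjb_trans (f : aff) (w : 'cV[R]_2) : alin f \in unitmx ->
  conjb f (Aff w 1%:M) = Aff (alin f *m w) 1%:M.
Proof.
case: f => v L /= U; rewrite conjbE // mulmx1 (mulmxV U) mul1mx.
by congr Aff; rewrite addrC addKr.
Qed.

Lemma aminusI_Psb : alin (aminusI R) = Psb true false.
Proof. by apply/mx2P; rewrite !mxE /sg /=; lra. Qed.

Lemma inNA_aminusI : inNA (aminusI R).
Proof.
apply: NAform_inNA; exists true, false; split; first exact: aminusI_Psb.
by rewrite /= !mxE subrr rpred0.
Qed.

Lemma not_out_aminusI : ~ out_equiv (conjb (aminusI R)) id.
Proof.
case=> g [hg /(_ _ (inM_e1 R))].
have Ug := Mform_unit hg.
rewrite !conjb_trans // ?aminusI_Psb ?Psb_unit //.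
move: hg => /inME [_ [_ [c ->]]] [] /matrixP /(_ 0 0).
rewrite Psbv0 !mul2 !mxE /sg /=; case: c => /=; lra.
Qed.

Lemma inv_uniq (x y : aff) : alin x \in unitmx -> acomp x y = aid R -> y = ainv x.
Proof.
move=> U h; rewrite -[y]acomp1f -(acompVf U) acompA h acompf1 //.
Qed.

Lemma conjb_comp (h m m' : aff) : alin h \in unitmx ->
  conjb h (acomp m m') = acomp (conjb h m) (conjb h m').
Proof.
move=> U; rewrite /conjb !acompA; congr acomp; congr acomp.
by rewrite -[in RHS]acompA acompVf // acomp1f.
Qed.

Lemma conjb_id (h : aff) : alin h \in unitmx -> conjb h (aid R) = aid R.
Proof. by move=> U; rewrite /conjb acompf1 acompV. Qed.

Lemma conjb_inv (h m : aff) : alin h \in unitmx -> alin m \in unitmx ->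
  conjb h (ainv m) = ainv (conjb h m).
Proof.
move=> U Um; apply: inv_uniq.
  by rewrite /conjb !unit_acomp // unit_ainv.
by rewrite -conjb_comp // acompV // conjb_id.
Qed.

Lemma conjb_conjb (h h' m : aff) : alin h \in unitmx -> alin h' \in unitmx ->
  conjb h (conjb h' m) = conjb (acomp h h') m.
Proof.
move=> U U'; rewrite /conjb.
have -> : ainv (acomp h h') = acomp (ainv h') (ainv h).
  apply/esym/inv_uniq; first exact: unit_acomp.
  by rewrite acompA -(acompA h' _ _) acompV // acomp1f acompV.
by rewrite !acompA.
Qed.

Lemma inM_conjb (g m : aff) : inM g -> inM m -> inM (conjb g m).
Proof. by move=> hg hm; rewrite /conjb; repeat (apply: inM_comp || apply: inM_inv). Qed.

Section Auto.
Variable alpha : aff -> aff.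
Hypothesis ha : is_autM alpha.

Lemma al_M m : inM m -> inM (alpha m).
Proof. by case: ha => h _ _ _; exact: h. Qed.
Lemma al_comp m m' : inM m -> inM m' -> alpha (acomp m m') = acomp (alpha m) (alpha m').
Proof. by case: ha => _ h _ _; exact: h. Qed.
Lemma al_inj m m' : inM m -> inM m' -> alpha m = alpha m' -> m = m'.
Proof. by case: ha => _ _ h _; exact: h. Qed.
Lemma al_surj m : inM m -> exists m', inM m' /\ alpha m' = m.
Proof. by case: ha => _ _ _ h; exact: h. Qed.

Lemma al_id : alpha (aid R) = aid R.
Proof.
have M1 := al_M (inM_id R); have U := Mform_unit M1.
have h := al_comp (inM_id R) (inM_id R); rewrite acompf1 in h.
have := congr1 (acomp (ainv (alpha (aid R)))) h.
by rewrite -acompA acompVf // acomp1f => <-.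
Qed.

Lemma al_inv m : inM m -> alpha (ainv m) = ainv (alpha m).
Proof.
move=> hm; apply: inv_uniq; first exact: Mform_unit (al_M hm).
by rewrite -al_comp ?acompV ?al_id //; [exact: Mform_unit | exact: inM_inv].
Qed.

Lemma al_conjb g m : inM g -> inM m -> alpha (conjb g m) = conjb (alpha g) (alpha m).
Proof.
move=> hg hm; rewrite /conjb !al_comp ?al_inv //; by repeat (apply: inM_comp || apply: inM_inv).
Qed.

Definition Qp (m : aff) := forall g, inM g -> acomp m (conjb g m) = acomp (conjb g m) m.

Lemma Qp_trans m : inM m -> (Qp m <-> alin m = 1%:M).
Proof.
move=> hm; split.
- move=> hQ; move: (hm) => /inME [_ [_ [c hc]]].
  case: c hc => hc; last by rewrite hc Psb_ff.
  exfalso; have := hQ _ (inM_e1 R); case: m hm hc hQ => a A /= hm hc hQ.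
  rewrite conjbE ?unitmx1 // /acomp /= invmx1 !mul1mx !mulmx1 hc.
  case=> /matrixP /(_ 1 0); rewrite !(mxBv, mxDv, mxNv, Psbv0, Psbv1) !mxE /sg /=; lra.
- move=> hL g hg; have Ug := Mform_unit hg.
  case: m hm hL => a A /= hm ->; rewrite conjb_trans // /acomp /= !mul1mx.
  by rewrite addrC.
Qed.

Lemma al_trans m : inM m -> (alin (alpha m) = 1%:M <-> alin m = 1%:M).
Proof.
move=> hm; rewrite -(Qp_trans hm) -(Qp_trans (al_M hm)); split.
- move=> hQ g hg; rewrite /Qp in hQ; have hc := inM_conjb hg hm.
  apply: al_inj; try exact: inM_comp.
  rewrite (al_comp hm hc) (al_comp hc hm) (al_conjb hg hm).
  exact: hQ (al_M hg).
- move=> hQ g hg; rewrite /Qp in hQ; have [g' [hg' <-]] := al_surj hg.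
  have hc := inM_conjb hg' hm.
  by rewrite -(al_conjb hg' hm) -(al_comp hm hc) -(al_comp hc hm) (hQ _ hg').
Qed.


Lemma conjb_PA (u : 'cV[R]_2) s b :
  conjb (Aff u (Psb s b)) (Aff 0 (Psb false true)) = Aff (u - Psb false true *m u) (Psb false true).
Proof.
rewrite conjbE ?Psb_unit // Psb_inv !Psb_mul mulmx0 addr0.
have -> : s (+) false (+) s = false by case: s.
by have -> : b (+) true (+) b = true by case: b.
Qed.

Lemma agree (h : aff) : alin h \in unitmx ->
  alpha (Aff (e1 R) 1%:M) = conjb h (Aff (e1 R) 1%:M) ->
  alpha (Aff (e2 R) 1%:M) = conjb h (Aff (e2 R) 1%:M) ->
  alpha (Aff 0 (Aswap R)) = conjb h (Aff 0 (Aswap R)) ->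
  forall m, inM m -> alpha m = conjb h m.
Proof.
move=> U h1 h2 h3 m; elim=> //.
- by rewrite al_id conjb_id.
- move=> f g hf IHf hg IHg; by rewrite al_comp // conjb_comp // IHf IHg.
- move=> f hf IH; rewrite al_inv // conjb_inv ?IH //; exact: Mform_unit.
Qed.

Definition inL (x y a0 a1 : R) := exists n k : int, a0 = n%:~R * x + k%:~R * y /\ a1 = n%:~R * y + k%:~R * x.

Lemma auto_main : out_equiv alpha id \/ out_equiv alpha (conjb (aminusI R)).
Proof.
have M1 := al_M (inM_e1 R); have M2 := al_M (inM_e2 R); have MA := al_M (inM_A R).
have L1 : alin (alpha (Aff (e1 R) 1%:M)) = 1%:M by apply/al_trans => //; exact: inM_e1.
have L2 : alin (alpha (Aff (e2 R) 1%:M)) = 1%:M by apply/al_trans => //; exact: inM_e2.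
move: M1 M2 L1 L2; case E1: (alpha (Aff (e1 R) 1%:M)) => [p P1]; case E2: (alpha (Aff (e2 R) 1%:M)) => [q P2].
move=> /= M1 M2 L1 L2; rewrite {}L1 in E1 M1; rewrite {}L2 in E2 M2.
move: MA; case EA: (alpha (Aff 0 (Aswap R))) => [v0 PA] MA.
have [PAt [c hc]] : True /\ exists c, PA = Psb false c by move/inME: MA => [_ [_ [c hc]]]; split=> //; exists c.
have {c hc} hPA : PA = Psb false true.
  case: c hc => hc //; exfalso.
  have : alin (alpha (Aff 0 (Aswap R))) = 1%:M by rewrite EA /= hc Psb_ff.
  move/al_trans => /(_ (inM_A R)) /= /matrixP /(_ 0 0); rewrite !mxE /=.
  by move/eqP; rewrite eq_sym oner_eq0.
rewrite {}hPA in EA MA.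
have hq : q = Psb false true *m p.
  have : Aff (e2 R) 1%:M = conjb (Aff 0 (Aswap R)) (Aff (e1 R) 1%:M).
    rewrite conjb_trans /=; last by rewrite -Psb_ft Psb_unit.
    by congr Aff; apply/cv2P; rewrite mul2 !mxE /=; lra.
  move=> /(congr1 alpha); rewrite al_conjb ?E2 ?EA ?E1; try exact: inM_A; try exact: inM_e1.
  by rewrite conjb_trans ?Psb_unit // => -[].
have hv0 : v0 1 0 = - v0 0 0.
  have : acomp (Aff 0 (Aswap R)) (Aff 0 (Aswap R)) = aid R.
    by rewrite /acomp /= mulmx0 addr0 -Psb_ft Psb_sq.
  move=> /(congr1 alpha); rewrite al_comp ?al_id ?EA; try exact: inM_A.
  rewrite /acomp /aid /= => -[] /matrixP /(_ 0 0); rewrite mxDv Psbv0 !mxE /sg /=; lra.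
move/inME: M1 => [/= /intrP [zx hx] [/intrP [zy hy] _]].
move/inME: MA => [/= /intrP [zt ht] _].
pose x := p 0 0; pose y := p 1 0; pose t := v0 0 0.
pose Sinv (h : aff) := exists c, alin h = Psb false c /\
   inL x y (atr h 0 0 - (if c then t else 0)) (atr h 1 0 - (if c then - t else 0)).
have hS : forall m, inM m -> Sinv (alpha m).
  move=> m; elim.
  - rewrite E1; exists false; split; first by rewrite Psb_ff.
    by exists 1, 0; rewrite /x /y; split; lra.
  - rewrite E2 hq; exists false; split; first by rewrite Psb_ff.
    by exists 0, 1; rewrite /x /y !Psbv0 !Psbv1 /sg /=; split; lra.
  - rewrite EA; exists true; split=> //=.
    by exists 0, 0; rewrite /t hv0; split; lra.
  - rewrite al_id; exists false; split; first by rewrite /= Psb_ff.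
    by exists 0, 0; rewrite /= !mxE /=; split; lra.
  - move=> f g hf [cf [hLf [nf [kf [ef0 ef1]]]]] hg [cg [hLg [ng [kg [eg0 eg1]]]]].
    rewrite al_comp //; move: (alpha f) (alpha g) hLf ef0 ef1 hLg eg0 eg1 => [w Lf] [w' Lg] /= -> ef0 ef1 -> eg0 eg1.
    exists (cf (+) cg); split; first by rewrite /= Psb_mul.
    rewrite /= !mxDv Psbv0 Psbv1 /sg /=.
    case: cf cg ef0 ef1 eg0 eg1 => [] [] /= ef0 ef1 eg0 eg1.
    + exists (nf + kg), (kf + ng); rewrite !intrD; split; nra.
    + exists (nf + kg), (kf + ng); rewrite !intrD; split; nra.
    + exists (nf + ng), (kf + kg); rewrite !intrD; split; nra.
    + exists (nf + ng), (kf + kg); rewrite !intrD; split; nra.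
  - move=> f hf [cf [hLf [nf [kf [ef0 ef1]]]]].
    rewrite al_inv //; move: (alpha f) hLf ef0 ef1 => [w Lf] /= -> ef0 ef1.
    exists cf; split; first by rewrite /= Psb_inv.
    rewrite /= Psb_inv !mxNv Psbv0 Psbv1 /sg /=.
    case: cf ef0 ef1 => /= ef0 ef1.
    + exists (- kf), (- nf); rewrite !intrN; split; nra.
    + exists (- nf), (- kf); rewrite !intrN; split; nra.
have [m1 [hm1 am1]] := al_surj (inM_e1 R).
have [c1 [hc1 [n [k [e10 e11]]]]] := hS _ hm1.
rewrite am1 /= in hc1 e10 e11.
have {hc1} c1f : c1 = false.
  case: c1 hc1 e10 e11 => // /matrixP /(_ 0 0); rewrite !mxE /sg /=; lra.
rewrite c1f !mxE /= subr0 in e10 e11.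
have k1 : (zx + zy) * (n + k) = 1.
  apply: (@intr_inj R); rewrite intrM !intrD -hx -hy /=; rewrite -/x -/y in e10 e11 *; nra.
have k2 : (zx - zy) * (n - k) = 1.
  apply: (@intr_inj R); rewrite intrM !intrB -hx -hy /=; rewrite -/x -/y in e10 e11 *; nra.
have := int_mul_eq1 k1; have := int_mul_eq1 k2 => j2 j1.
have cases : (zx = 1 /\ zy = 0) \/ (zx = 0 /\ zy = 1) \/ (zx = -1 /\ zy = 0) \/ (zx = 0 /\ zy = -1) by lia.
pose u : 'cV[R]_2 := \col_i (if val i == 0%N then t else 0).
have fin : forall s b, p = Psb s b *m e1 R ->
    forall m, inM m -> alpha m = conjb (Aff u (Psb s b)) m.
  move=> s b hp; apply: agree; first exact: Psb_unit.
  - by rewrite E1 conjb_trans ?Psb_unit //= hp.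
  - rewrite E2 conjb_trans ?Psb_unit //= hq hp; congr Aff; apply/cv2P;
    by rewrite ?Psbv0 ?Psbv1; case: (s); case: (b); rewrite /= ?Psbv0 ?Psbv1 !mxE /sg /=; lra.
  - rewrite EA -Psb_ft conjb_PA; congr Aff.
    by apply/cv2P; rewrite mxBv ?Psbv0 ?Psbv1 !mxE /sg /= ?hv0 /t; lra.
have uM : forall b, inM (Aff u (Psb false b)).
  by move=> b; apply/inME; split; [|split; [|by exists b]]; rewrite /= !mxE /= /t ?ht ?intr_int ?rpred0.
have finF : forall b, p = Psb false b *m e1 R -> out_equiv alpha id.
  move=> b hp; exists (Aff u (Psb false b)); split; first exact: uM.
  by move=> m hm; rewrite (fin _ _ hp m hm).
have finT : forall b, p = Psb true b *m e1 R -> out_equiv alpha (conjb (aminusI R)).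
  move=> b hp; exists (Aff u (Psb false b)); split; first exact: uM.
  move=> m hm; rewrite (fin _ _ hp m hm) conjb_conjb ?Psb_unit ?aminusI_Psb ?Psb_unit //.
  congr conjb; rewrite /acomp /= mulmx0 addr0.
  have -> : (- 1%:M : 'M[R]_2) = Psb true false by exact: aminusI_Psb.
  by rewrite Psb_mul addbF.
have pE : forall s b, p 0 0 = sg s * (if b then 0 else 1) -> p 1 0 = sg s * (if b then 1 else 0) ->
   p = Psb s b *m e1 R.
  by move=> s b h0 h1; apply/cv2P; rewrite ?Psbv0 ?Psbv1 !mxE /= ?h0 ?h1; case: (b); rewrite /=; lra.
case: cases => [[u0 u1]|[[u0 u1]|[[u0 u1]|[u0 u1]]]].
- by left; apply: (finF false); apply: pE; rewrite /sg /= ?hx ?hy ?u0 ?u1 /=; lra.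
- by left; apply: (finF true); apply: pE; rewrite /sg /= ?hx ?hy ?u0 ?u1 /=; lra.
- by right; apply: (finT false); apply: pE; rewrite /sg /= ?hx ?hy ?u0 ?u1 /= ?mulrNz; lra.
- by right; apply: (finT true); apply: pE; rewrite /sg /= ?hx ?hy ?u0 ?u1 /= ?mulrNz; lra.
Qed.

End Auto.

Definition c2 (a : R) : R := cos (2 * pi * a).
Definition s2 (a : R) : R := sin (2 * pi * a).

Lemma pi2E : (pi *+ 2 : R) = 2 * pi.
Proof. by rewrite mulr2n; ring. Qed.

Lemma cos_int (x : R) (z : int) : cos (x + 2 * pi * z%:~R) = cos x.
Proof.
have P := @cosD2pi R; rewrite pi2E in P.
case: z => n.
  rewrite (_ : 2 * pi * (Posz n)%:~R = (2 * pi) *+ n); first exact: (periodicn P n x).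
  by rewrite -[RHS]mulr_natr.
rewrite NegzE mulrNz mulrN.
rewrite -[in RHS](subrK (2 * pi * (n.+1)%:~R) x).
rewrite (_ : 2 * pi * (Posz n.+1)%:~R = (2 * pi) *+ n.+1); first exact/esym/(periodicn P).
by rewrite -[RHS]mulr_natr.
Qed.
Lemma sin_int (x : R) (z : int) : sin (x + 2 * pi * z%:~R) = sin x.
Proof.
have P := @sinD2pi R; rewrite pi2E in P.
case: z => n.
  rewrite (_ : 2 * pi * (Posz n)%:~R = (2 * pi) *+ n); first exact: (periodicn P n x).
  by rewrite -[RHS]mulr_natr.
rewrite NegzE mulrNz mulrN.
rewrite -[in RHS](subrK (2 * pi * (n.+1)%:~R) x).
rewrite (_ : 2 * pi * (Posz n.+1)%:~R = (2 * pi) *+ n.+1); first exact/esym/(periodicn P).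
by rewrite -[RHS]mulr_natr.
Qed.

Lemma c2_int a d : isint d -> c2 (a + d) = c2 a.
Proof. by move=> /intrP [z ->]; rewrite /c2 mulrDr cos_int. Qed.
Lemma s2_int a d : isint d -> s2 (a + d) = s2 a.
Proof. by move=> /intrP [z ->]; rewrite /s2 mulrDr sin_int. Qed.

Lemma c2D a b : c2 (a + b) = c2 a * c2 b - s2 a * s2 b.
Proof. by rewrite /c2 /s2 mulrDr cosD. Qed.
Lemma s2D a b : s2 (a + b) = s2 a * c2 b + c2 a * s2 b.
Proof. by rewrite /c2 /s2 mulrDr sinD. Qed.
Lemma c2N a : c2 (- a) = c2 a.
Proof. by rewrite /c2 mulrN cosN. Qed.
Lemma s2N a : s2 (- a) = - s2 a.
Proof. by rewrite /s2 mulrN sinN. Qed.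
Lemma c2s2 a : c2 a ^+ 2 + s2 a ^+ 2 = 1.
Proof. exact: cos2Dsin2. Qed.
Lemma c2_le1 a : `|c2 a| <= 1. Proof. exact: cos_max. Qed.
Lemma s2_le1 a : `|s2 a| <= 1. Proof. exact: sin_max. Qed.

Lemma in0pi (x : R) : 0 <= x <= pi -> x \in `[0, pi].
Proof. by rewrite in_itv /=. Qed.

Lemma cos_le_mono (x y : R) : 0 <= x -> x <= y -> y <= pi -> cos y <= cos x.
Proof.
move=> hx hxy hy; rewrite leNgt; apply/negP.
rewrite (ltr_cos (in0pi _) (in0pi _)); first by rewrite ltNge hxy.
- by apply/andP; split; lra.
- by apply/andP; split; lra.
Qed.
Lemma cos_lt_mono (x y : R) : 0 <= x -> x < y -> y <= pi -> cos y < cos x.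
Proof.
move=> hx hxy hy.
rewrite (ltr_cos (in0pi _) (in0pi _)) //.
- by apply/andP; split; lra.
- by apply/andP; split; lra.
Qed.

Lemma floor_half (t : R) : exists k : int, -(1/2) <= t - k%:~R < 1/2.
Proof.
exists (Num.floor (t + 1/2)); have := floor_itv (t + 1/2).
rewrite intrD mulr1z => /andP [h1 h2]; apply/andP; split; lra.
Qed.

Lemma c2_abs t : c2 t = cos (2 * pi * `|t|).
Proof.
rewrite /c2 -cos_norm normrM; congr cos; congr (_ * _).
by rewrite ger0_norm // mulr_ge0 // pi_ge0.
Qed.

Lemma c2_lt1 (eta : R) : 0 < eta <= 1/2 -> c2 eta < 1.
Proof.
move=> /andP [h1 h2]; rewrite /c2 -[X in _ < X]cos0.
have := pi_gt0 R => hp.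
apply: cos_lt_mono => //; [nra | nra].
Qed.

Lemma cos_near (eta t : R) : 0 < eta <= 1/2 -> c2 eta < c2 t ->
  exists k : int, `|t - k%:~R| < eta.
Proof.
move=> /andP [h1 h2] hc; have [k hk] := floor_half t; exists k.
rewrite ltNge; apply/negP => hge.
have hp := pi_gt0 R.
have hc' : c2 t = cos (2 * pi * `|t - k%:~R|).
  by rewrite -c2_abs -[in LHS](subrK k%:~R t) c2_int // intr_int.
rewrite hc' in hc.
have ha : `|t - k%:~R| <= 1/2 by rewrite ler_norml; apply/andP; split; lra.
have : cos (2 * pi * `|t - k%:~R|) <= cos (2 * pi * eta).
  by apply: cos_le_mono; nra.
by rewrite /c2 in hc; lra.
Qed.

Lemma cos_eq1_int (t : R) : c2 t = 1 -> isint t.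
Proof.
move=> hc; have [k hk] := floor_half t.
have hp := pi_gt0 R.
have hc' : c2 t = cos (2 * pi * `|t - k%:~R|).
  by rewrite -c2_abs -[in LHS](subrK k%:~R t) c2_int // intr_int.
rewrite hc in hc'.
case: (eqVneq (t - k%:~R) 0) => [h0|hne].
  by have -> : t = k%:~R by lra.
have : cos (2 * pi * `|t - k%:~R|) < cos 0.
  have ha : `|t - k%:~R| <= 1/2 by rewrite ler_norml; apply/andP; split; lra.
  have hb : 0 < `|t - k%:~R| by rewrite normr_gt0.
  by apply: cos_lt_mono; nra.
by rewrite -hc' cos0 ltxx.
Qed.

Definition mk2 (a b c d : R) : 'M[R]_2 :=
  \matrix_(i, j) (if val i == 0%N then (if val j == 0%N then a else b) else (if val j == 0%N then c else d)).
Definition Gm (s : bool) (a : R) : 'M[R]_2 :=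
  mk2 (c2 a) (if s then s2 a else - s2 a) (s2 a) (if s then - c2 a else c2 a).
Definition sgnf (f : aff) : bool := alin f 0 0 + alin f 0 1 < 0.
Definition Fm (f : aff) : 'M[R]_2 := Gm (sgnf f) (atr f 0 0).

Lemma Gm00 s a : Gm s a 0 0 = c2 a.
Proof. by rewrite !mxE. Qed.
Lemma Gm10 s a : Gm s a 1 0 = s2 a.
Proof. by rewrite !mxE. Qed.
Lemma Gm01 s a : Gm s a 0 1 = if s then s2 a else - s2 a.
Proof. by rewrite !mxE. Qed.
Lemma Gm11 s a : Gm s a 1 1 = if s then - c2 a else c2 a.
Proof. by rewrite !mxE. Qed.

Lemma trE (A : 'M[R]_2) i j : A^T i j = A j i.
Proof. by rewrite mxE. Qed.

Lemma Gm_orth s a : (Gm s a)^T *m Gm s a = 1%:M.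
Proof.
have h := c2s2 a; rewrite !expr2 in h.
by apply/mx2P; rewrite !mul2 !trE ?Gm00 ?Gm10 ?Gm01 ?Gm11 !mxE /=; case: s; lra.
Qed.

Lemma Gm_int s a d : isint d -> Gm s (a + d) = Gm s a.
Proof. by move=> hd; rewrite /Gm ?c2_int ?s2_int. Qed.

Lemma Gm_mul s t a b : Gm s a *m Gm t b = Gm (s (+) t) (a + sg s * b).
Proof.
apply/mx2P; rewrite !mul2 ?Gm00 ?Gm10 ?Gm01 ?Gm11;
by case: s; case: t; rewrite /sg /= ?mulN1r ?mul1r ?c2D ?s2D ?c2N ?s2N; ring.
Qed.

Lemma sgnfE (f : aff) s b : alin f = Psb s b -> sgnf f = s.
Proof. by move=> h; rewrite /sgnf h !mxE /=; case: (s); case: (b); rewrite /sg /=; apply/idP/idP; lra. Qed.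

Lemma FmE (f : aff) s b : alin f = Psb s b -> Fm f = Gm s (atr f 0 0).
Proof. by move=> h; rewrite /Fm (sgnfE h). Qed.

Lemma Fm_mul (f g : aff) : NAform f -> NAform g -> Fm (acomp f g) = Fm f *m Fm g.
Proof.
move=> [s [b [hf df]]] [s' [b' [hg dg]]].
rewrite (FmE hf) (FmE hg) Gm_mul (@FmE _ (s (+) s') (b (+) b')); last by rewrite /= hf hg Psb_mul.
rewrite /= hf mxDv Psbv0.
case: (b); last by [].
rewrite [in RHS](_ : atr f 0 0 + sg s * atr g 0 0 = (atr f 0 0 + sg s * atr g 1 0) + sg s * (atr g 0 0 - atr g 1 0)); last by ring.
by rewrite [in RHS]Gm_int //; apply: rpredM => //; exact: isint_sg.
Qed.

Lemma enorm_ge (z : 'cV[R]_2) : `|z 0 0| <= enorm z.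
Proof.
rewrite enormE -sqrtr_sqr; apply: ler_wsqrtr.
by rewrite lerDl sqr_ge0.
Qed.

Lemma half_int (a : R) : isint a -> 1/2 <= `|1/2 + a|.
Proof.
move=> /intrP [z ->]; have [hz|hz] := lerP 0 z.
- have : (0 : R) <= z%:~R by rewrite ler0z.
  move=> h; apply: le_trans (ler_norm _); lra.
- have h2 : (z%:~R : R) <= -1 by rewrite -mulrN1z ler_int; lia.
  rewrite -normrN; apply: le_trans (ler_norm _); lra.
Qed.

Lemma key (f g : aff) s b s' b' (delta : R) :
  alin f = Psb s b -> alin g = Psb s' b' -> isint (atr g 0 0 - atr g 1 0) ->
  0 <= delta < 1/2 ->
  (forall x, exists m, inM m /\ enorm (app f x - app m (app g x)) <= delta) ->
  s = s' /\ exists2 k, isint k & `|atr f 0 0 - atr g 0 0 - k| <= delta.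
Proof.
move=> hf hg dg /andP[d0 d1] H.
have happg : forall y, app g (Psb s' b' *m (y - atr g)) = y.
  by move=> y; rewrite /app hg mulmxA Psb_sq mul1mx addrC subrK.
have happf : forall y, app f (Psb s' b' *m (y - atr g)) =
    atr f + Psb (s (+) s') (b (+) b') *m (y - atr g).
  by move=> y; rewrite /app hf mulmxA Psb_mul.
have Hy : forall y, exists m, inM m /\
    `|(atr f + Psb (s (+) s') (b (+) b') *m (y - atr g) - app m y) 0 0| <= delta.
  move=> y; have [m [hm hd]] := H (Psb s' b' *m (y - atr g)); exists m; split=> //.
  rewrite happg happf in hd; exact: le_trans (enorm_ge _) hd.
have hs : s (+) s' = false.
  case E: (s (+) s') => //; exfalso; rewrite E in Hy.
  have [U hU] : exists U, U = atr f 0 0 - sg true * (if b (+) b' then atr g 1 0 else atr g 0 0) by eexists.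
  have [m [hm hd]] := Hy (\col_(i < 2) ((U + 1/2) / 2)).
  move/inME: hm => [ha0 [_ [c' hc']]].
  move: hd; rewrite /app hc' !(mxBv, mxDv, Psbv0) /= ?(mxBv, mxDv, Psbv0) !mxE /=.
  rewrite ler_norml => /andP [hd1 hd2].
  have := half_int ha0; rewrite ler_normr => /orP [h|h];
  by case: (b (+) b') (c') hU hd1 hd2 => [] [] /=; rewrite /sg /=; lra.
have hss : s = s' by move: hs; case: (s); case: (s').
split=> //.
have [m [hm hd]] := Hy 0.
move/inME: hm => [ha0 [_ [c' hc']]].
move: hd; rewrite hs /app hc' mulmx0 addr0 sub0r !(mxBv, mxDv, Psbv0, mxNv) /sg /=.
case: (b (+) b') => hd.
- exists (atr m 0 0 - (atr g 0 0 - atr g 1 0)); first by apply: rpredB.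
  by apply: le_trans hd; rewrite le_eqVlt; apply/orP; left; apply/eqP; f_equal; lra.
- exists (atr m 0 0) => //.
  by apply: le_trans hd; rewrite le_eqVlt; apply/orP; left; apply/eqP; f_equal; lra.
Qed.
Local Open Scope classical_set_scope.

Lemma enorm_ge0 (z : 'cV[R]_2) : 0 <= enorm z.
Proof. by rewrite /enorm sqrtr_ge0. Qed.

Lemma odist_ne (p q : 'cV[R]_2) : [set enorm (p - app g q) | g in inM] !=set0.
Proof. by exists (enorm (p - app (aid R) q)); exists (aid R) => //; exact: inM_id. Qed.

Lemma odist_lb (p q : 'cV[R]_2) : has_lbound [set enorm (p - app g q) | g in inM].
Proof. by exists 0 => _ [g _ <-]; exact: enorm_ge0. Qed.

Lemma odist_le (p q : 'cV[R]_2) m : inM m -> odist p q <= enorm (p - app m q).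
Proof. by move=> hm; apply: (ge_inf (odist_lb p q)); exists m. Qed.

Lemma odist_lt (p q : 'cV[R]_2) d : odist p q < d -> exists m, inM m /\ enorm (p - app m q) < d.
Proof. by move=> /(inf_lt (odist_ne p q)) [_ [m hm <-] h]; exists m. Qed.

Lemma sqrt2 (z0 z1 B : R) : 0 <= B -> z0 ^+ 2 + z1 ^+ 2 <= B ^+ 2 -> Num.sqrt (z0 ^+ 2 + z1 ^+ 2) <= B.
Proof.
move=> hB h; rewrite -(ger0_norm hB) -sqrtr_sqr; exact: ler_wsqrtr.
Qed.

Lemma odist_ub (p q : 'cV[R]_2) : odist p q <= 2.
Proof.
pose a : 'cV[R]_2 := \col_(i < 2) ((Num.floor (p i 0 - q i 0))%:~R).
have ha : inM (Aff a 1%:M).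
  apply/inME; split; [|split; [|exists false; by rewrite Psb_ff]]; by rewrite /= mxE intr_int.
apply: le_trans (odist_le p q ha) _.
rewrite enormE /app /= mul1mx; apply: sqrt2 => //.
have := floor_itv (p 0 0 - q 0 0); have := floor_itv (p 1 0 - q 1 0).
rewrite !intrD !mulr1z => /andP [h1 h2] /andP [h3 h4].
rewrite !(mxBv, mxDv) !mxE /=; nra.
Qed.

Lemma sup_ne (f g : aff) : [set odist (app f x) (app g x) | x in [set: 'cV[R]_2]] !=set0.
Proof. by exists (odist (app f 0) (app g 0)); exists 0. Qed.

Lemma sup_has (f g : aff) : has_sup [set odist (app f x) (app g x) | x in [set: 'cV[R]_2]].
Proof. by split; [exact: sup_ne | exists 2 => _ [x _ <-]; exact: odist_ub]. Qed.

Lemma supdist_ge (f g : aff) x : odist (app f x) (app g x) <= supdist f g.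
Proof. by apply: (sup_upper_bound (sup_has f g)); exists x. Qed.

Lemma supdist_le (f g : aff) c : (forall x, odist (app f x) (app g x) <= c) -> supdist f g <= c.
Proof. by move=> h; apply: ge_sup; [exact: sup_ne | move=> _ [x _ <-]; exact: h]. Qed.

Lemma enorm_cst (t : R) : enorm (\col_(i < 2) t) <= 2 * `|t|.
Proof.
rewrite enormE !mxE; apply: sqrt2; first by rewrite mulr_ge0.
rewrite exprMn real_normK ?num_real //; nra.
Qed.

Lemma mk_m (f g : aff) s b b' (t : R) :
  alin f = Psb s b -> alin g = Psb s b' ->
  isint (atr f 0 0 - atr f 1 0) -> isint (atr g 0 0 - atr g 1 0) ->
  isint (atr f 0 0 - atr g 0 0 - t) ->
  exists m, inM m /\ forall x, app f x - app m (app g x) = \col_(i < 2) t.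
Proof.
move=> hf hg df dg dt.
pose P := Psb false (b (+) b').
exists (Aff (atr f - P *m atr g - \col_(i < 2) t) P); split.
- apply/inME; split; last split; last by exists (b (+) b').
  + rewrite /= !mxBv Psbv0 !mxE /sg /=.
    case: (b (+) b').
    * by apply: (@isint_eq _ ((atr f 0 0 - atr g 0 0 - t) + (atr g 0 0 - atr g 1 0))); [lra | apply: rpredD].
    * by apply: (@isint_eq _ (atr f 0 0 - atr g 0 0 - t)); [lra | done].
  + rewrite /= !mxBv Psbv1 !mxE /sg /=.
    case: (b (+) b').
    * by apply: (@isint_eq _ ((atr f 0 0 - atr g 0 0 - t) - (atr f 0 0 - atr f 1 0))); [lra | apply: rpredB].
    * apply: (@isint_eq _ ((atr f 0 0 - atr g 0 0 - t) - (atr f 0 0 - atr f 1 0) + (atr g 0 0 - atr g 1 0))); first lra.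
      by apply: rpredD => //; apply: rpredB.
- move=> x; rewrite /app /= hf hg mulmxDr mulmxA /P Psb_mul.
  have -> : b (+) b' (+) b' = b by case: (b); case: (b').
  rewrite /=; apply/cv2P; rewrite !(mxBv, mxDv) !mxE /=; lra.
Qed.

Lemma cs_contra (c s c' s' : R) : c = c' -> s = s' -> c ^+ 2 + s ^+ 2 = 1 -> s = - s' -> c = - c' -> False.
Proof. move=> h1 h2 h3 h4 h5; nra. Qed.

Lemma same_Fm (f g : aff) : NAform f -> NAform g -> (same_star f g <-> Fm f = Fm g).
Proof.
move=> [s [b [hf df]]] [s' [b' [hg dg]]]; rewrite (FmE hf) (FmE hg); split.
- move=> hs.
  have H : forall x, exists m, inM m /\ enorm (app f x - app m (app g x)) <= 0.
    move=> x; have [m [hm e]] := hs x; exists m; split=> //.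
    by rewrite e subrr enormE !mxE expr0n /= addr0 sqrtr0.
  have h0 : 0 <= (0:R) < 1/2 by apply/andP; split; lra.
  have [hss [k hk hle]] := key hf hg dg h0 H; rewrite -hss.
  have -> : atr f 0 0 = atr g 0 0 + k.
    by move: hle; rewrite normr_le0 subr_eq0 => /eqP h; rewrite -h; ring.
  by rewrite Gm_int.
- move=> /matrixP E.
  have e00 := E 0 0; have e10 := E 1 0; have e01 := E 0 1; have e11 := E 1 1; clear E.
  rewrite ?Gm00 ?Gm10 ?Gm01 ?Gm11 in e00 e10 e01 e11.
  have ca := c2s2 (atr f 0 0).
  have hss : s = s'.
    by move: e01 e11; case: (s); case: (s') => //= e01 e11; exfalso; apply: (cs_contra e00 e10 ca); lra.
  subst s'.
  have hc : c2 (atr f 0 0 - atr g 0 0) = 1.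
    rewrite c2D c2N s2N -e00 -e10; rewrite !expr2 in ca; lra.
  have hi := cos_eq1_int hc.
  have hi0 : isint (atr f 0 0 - atr g 0 0 - 0) by rewrite subr0.
  have [m [hm hm']] := mk_m hf hg df dg hi0.
  move=> x; exists m; split=> //; apply/eqP; rewrite -subr_eq0 hm'.
  by apply/eqP/cv2P; rewrite !mxE.
Qed.

Lemma inSym_NA (f : aff) : inSym f -> NAform f.
Proof. by case=> /inNA_NAform. Qed.
Lemma NA_inSym (f : aff) : NAform f -> inSym f.
Proof. by move=> h; split; [exact: NAform_inNA | exact: NAform_iso]. Qed.

Lemma Fm_orth (f : aff) : NAform f -> (Fm f)^T *m Fm f = 1%:M.
Proof. by move=> [s [b [hf _]]]; rewrite (FmE hf) Gm_orth. Qed.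

Lemma angle_exists (c s : R) : c ^+ 2 + s ^+ 2 = 1 -> exists a, c2 a = c /\ s2 a = s.
Proof.
move=> h.
have hc : -1 <= c <= 1 by apply/andP; split; nra.
have hp := pi_gt0 R.
pose phi := acos c.
have cphi : cos phi = c by rewrite /phi acosK // in_itv /=.
have sphi : sin phi = `|s|.
  rewrite /phi sin_acos // -sqrtr_sqr; congr Num.sqrt; lra.
exists ((if 0 <= s then phi else - phi) / (2 * pi)); rewrite /c2 /s2.
have -> : 2 * pi * ((if 0 <= s then phi else - phi) / (2 * pi)) = (if 0 <= s then phi else - phi).
  by field; apply/eqP; nra.
case: ifP => hs.
- by rewrite cphi sphi ger0_norm.
- by rewrite cosN sinN cphi sphi ltr0_norm ?opprK // ltNge hs.
Qed.

Lemma Fm_surj (Q : 'M[R]_2) : Q^T *m Q = 1%:M -> exists f, inSym f /\ Fm f = Q.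
Proof.
move=> /matrixP E.
have h00 := E 0 0; have h01 := E 0 1; have h11 := E 1 1; clear E.
rewrite !mul2 !trE !mxE /= in h00 h01 h11.
set q00 := Q 0 0 in h00 h01 h11 *; set q01 := Q 0 1 in h00 h01 h11 *.
set q10 := Q 1 0 in h00 h01 h11 *; set q11 := Q 1 1 in h00 h01 h11 *.
set D := q00 * q11 - q01 * q10.
have i1 : q01 * (q00 * q00 + q10 * q10) + q10 * D = q00 * (q00 * q01 + q10 * q11) by rewrite /D; ring.
have i2 : q11 * (q00 * q00 + q10 * q10) - q00 * D = q10 * (q00 * q01 + q10 * q11) by rewrite /D; ring.
have i3 : D * D = (q00 * q00 + q10 * q10) * (q01 * q01 + q11 * q11) - (q00 * q01 + q10 * q11) ^+ 2 by rewrite /D; ring.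
rewrite h00 h01 in i1 i2; rewrite h00 h11 h01 in i3; clearbody D.
have hq : q00 ^+ 2 + q10 ^+ 2 = 1 by rewrite !expr2.
have [a [ca sa]] := angle_exists hq.
have hD : D = 1 \/ D = -1.
  have : (D - 1) * (D + 1) = 0 by rewrite (_ : (D - 1) * (D + 1) = D * D - 1); [rewrite i3; ring | ring].
  by move/eqP; rewrite mulf_eq0 => /orP [/eqP h|/eqP h]; [left|right]; lra.
pose s := D < 0.
exists (Aff (\col_(i < 2) a) (Psb s false)); split.
  apply: NA_inSym; exists s, false; split=> //.
  by rewrite /= !mxE subrr rpred0.
rewrite (@FmE _ s false) //=; apply/mx2P; rewrite ?Gm00 ?Gm10 ?Gm01 ?Gm11 !mxE /= -/q00 -/q01 -/q10 -/q11.
- by rewrite ca.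
- rewrite /s; case: hD => hD; rewrite hD sa; (case: ifP => hh; [|move/negbT: hh; rewrite -leNgt => hh]); nra.
- by rewrite sa.
- rewrite /s; case: hD => hD; rewrite hD ca; (case: ifP => hh; [|move/negbT: hh; rewrite -leNgt => hh]); nra.
Qed.

Lemma normM_le (x y B : R) : `|x| <= 1 -> `|y| <= B -> `|x * y| <= B.
Proof. move=> h1 h2; rewrite normrM; have h3 := normr_ge0 x; have h4 := normr_ge0 y; nra. Qed.

Lemma trig_close (e' t a : R) : 0 < e' <= 1 -> 2 * pi * `|t| <= acos (1 - e' ^+ 2 / 16) ->
  `|c2 a - c2 (a - t)| < e' /\ `|s2 a - s2 (a - t)| < e'.
Proof.
move=> /andP [he1 he2] ht.
have hp := pi_gt0 R.
have hcc : 0 < e' ^+ 2 / 16 <= 1/16 by apply/andP; split; nra.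
have hin : -1 <= 1 - e' ^+ 2 / 16 <= 1 by apply/andP; split; nra.
have hX : acos (1 - e' ^+ 2 / 16) <= pi by exact: acos_lepi.
have hcX : cos (acos (1 - e' ^+ 2 / 16)) = 1 - e' ^+ 2 / 16 by rewrite acosK // in_itv /=.
have hct : 1 - e' ^+ 2 / 16 <= c2 t.
  rewrite c2_abs -hcX; have h0 := normr_ge0 t; apply: cos_le_mono; nra.
have hct1 : c2 t <= 1 by exact: cos_le1.
have hst : s2 t ^+ 2 <= e' ^+ 2 / 8 by have := c2s2 t; nra.
have hst2 : `|s2 t| < e' / 2.
  rewrite ltNge; apply/negP => h; have h0 := normr_ge0 (s2 t).
  have : (e' / 2) ^+ 2 <= `|s2 t| ^+ 2 by rewrite lerXn2r // ?nnegrE //; lra.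
  rewrite real_normK ?num_real //; nra.
have ha1 := c2_le1 a; have ha2 := s2_le1 a.
have h1c : `|1 - c2 t| <= e' ^+ 2 / 16 by rewrite ger0_norm; lra.
have hA : `|c2 a * (1 - c2 t)| <= e' ^+ 2 / 16 by exact: normM_le.
have hB : `|s2 a * s2 t| <= `|s2 t| by apply: normM_le.
have hB' : `|c2 a * s2 t| <= `|s2 t| by apply: normM_le.
have hA' : `|s2 a * (1 - c2 t)| <= e' ^+ 2 / 16 by exact: normM_le.
split.
- have -> : c2 a - c2 (a - t) = c2 a * (1 - c2 t) - s2 a * s2 t by rewrite c2D c2N s2N; ring.
  apply: le_lt_trans (ler_normB _ _) _; nra.
- have -> : s2 a - s2 (a - t) = s2 a * (1 - c2 t) + c2 a * s2 t by rewrite s2D c2N s2N; ring.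
  apply: le_lt_trans (ler_normD _ _) _; nra.
Qed.

Lemma normNN (X Y : R) : `|- X - - Y| = `|X - Y|.
Proof. by rewrite -normrN; f_equal; ring. Qed.

Lemma cont1 (f : aff) : NAform f -> forall e : R, 0 < e ->
  exists2 d : R, 0 < d & forall g, NAform g -> supdist f g < d ->
    forall i j, `|Fm f i j - Fm g i j| < e.
Proof.
move=> [s [b [hf df]]] e he.
have [e' [h1 [h2 h3]]] : exists e', 0 < e' /\ e' <= 1 /\ e' <= e.
  by case: (lerP e 1) => h; [exists e | exists 1]; lra.
have hp := pi_gt0 R.
have hX : 0 < acos (1 - e' ^+ 2 / 16) by apply: acos_gt0; apply/andP; split; nra.
set X0 := acos (1 - e' ^+ 2 / 16) in hX *.
have [d [d1 [d2 d3]]] : exists d, 0 < d /\ d <= 1/4 /\ 2 * pi * d <= X0.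
  case: (lerP (X0 / (2 * pi)) (1/4)) => h.
  - exists (X0 / (2 * pi)); split; first by apply: divr_gt0 => //; lra.
    by split=> //; rewrite mulrC mulfVK //; apply/eqP; lra.
  - exists (1/4); split; first lra; split; first lra.
    move: h; rewrite ltr_pdivlMr ?mulr_gt0 //; lra.
exists d => // g [s' [b' [hg dg]]] hsup.
have H : forall x, exists m, inM m /\ enorm (app f x - app m (app g x)) <= d.
  move=> x; have [m [hm hlt]] := odist_lt (le_lt_trans (supdist_ge f g x) hsup).
  by exists m; split=> //; exact: ltW.
have hd : 0 <= d < 1/2 by apply/andP; split; lra.
have [hss [k hk hle]] := key hf hg dg hd H; subst s'.
rewrite (FmE hf) (FmE hg).
set t := atr f 0 0 - atr g 0 0 - k in hle.
have -> : Gm s (atr g 0 0) = Gm s (atr f 0 0 - t) by rewrite /t (_ : _ - _ = atr g 0 0 + k) ?Gm_int //; ring.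
have ht : 2 * pi * `|t| <= X0 by have := normr_ge0 t; nra.
have he' : 0 < e' <= 1 by apply/andP.
have [hc hs] := trig_close (atr f 0 0) he' ht.
move=> i j; case: (ord2 i) => ->; case: (ord2 j) => ->;
  rewrite ?Gm00 ?Gm10 ?Gm01 ?Gm11; case: (s); rewrite ?normNN; lra.
Qed.

Lemma small_contra (c s d : R) : -d < c < d -> -d < s < d -> d <= 1/2 -> c ^+ 2 + s ^+ 2 = 1 -> False.
Proof. move=> /andP [h1 h2] /andP [h3 h4] h5 h6; nra. Qed.

Lemma close_cos (cv sv cw sw d : R) : cv ^+ 2 + sv ^+ 2 = 1 -> cw ^+ 2 + sw ^+ 2 = 1 ->
  -d < cv - cw < d -> -d < sv - sw < d -> 0 < d -> 1 - d ^+ 2 < cv * cw + sv * sw.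
Proof. move=> h1 h2 /andP [h3 h4] /andP [h5 h6] h7; nra. Qed.

Lemma cont2 (f : aff) : NAform f -> forall e : R, 0 < e ->
  exists2 d : R, 0 < d & forall g, NAform g ->
    (forall i j, `|Fm f i j - Fm g i j| < d) -> supdist f g < e.
Proof.
move=> [s [b [hf df]]] e he.
have [eta [h1 [h2 h3]]] : exists eta, 0 < eta /\ eta <= 1/4 /\ eta <= e / 4.
  by case: (lerP (e / 4) (1/4)) => h; [exists (e / 4) | exists (1/4)]; lra.
have heta : 0 < eta <= 1/2 by apply/andP; split; lra.
have hg0 : 0 < 1 - c2 eta by have := c2_lt1 heta; lra.
have [d [d1 [d2 d3]]] : exists d, 0 < d /\ d <= 1/2 /\ d <= (1 - c2 eta) / 2.
  by case: (lerP ((1 - c2 eta) / 2) (1/2)) => h; [exists ((1 - c2 eta) / 2) | exists (1/2)]; lra.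
exists d => // g [s' [b' [hg dg]]] H.
have H00 := H 0 0; have H10 := H 1 0; have H01 := H 0 1; have H11 := H 1 1; clear H.
move: H00 H10 H01 H11; rewrite (FmE hf) (FmE hg) ?Gm00 ?Gm10 ?Gm01 ?Gm11 !ltr_norml => /andP [a1 a2] /andP [b1 b2] /andP [c1 c2'] /andP [e1' e2'].
have cf := c2s2 (atr f 0 0); have cg := c2s2 (atr g 0 0).
have hss : s = s'.
  move: c1 c2' e1' e2'; case: (s); case: (s') => //= c1 c2' e1' e2'; exfalso.
  - by apply: (small_contra (c := c2 (atr f 0 0)) (s := s2 (atr f 0 0)) (d := d)) => //; apply/andP; split; lra.
  - by apply: (small_contra (c := c2 (atr f 0 0)) (s := s2 (atr f 0 0)) (d := d)) => //; apply/andP; split; lra.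
subst s'.
have hcc : c2 eta < c2 (atr f 0 0 - atr g 0 0).
  rewrite c2D c2N s2N.
  have hA : -d < c2 (atr f 0 0) - c2 (atr g 0 0) < d by apply/andP; split; lra.
  have hB : -d < s2 (atr f 0 0) - s2 (atr g 0 0) < d by apply/andP; split; lra.
  have := close_cos cf cg hA hB d1; nra.
have [k hk] := cos_near heta hcc.
have hki : isint (atr f 0 0 - atr g 0 0 - (atr f 0 0 - atr g 0 0 - k%:~R)).
  by rewrite (_ : _ - _ = k%:~R) ?intr_int //; ring.
have [m [hm hdiff]] := mk_m hf hg df dg hki.
set t := atr f 0 0 - atr g 0 0 - k%:~R in hk hdiff.
apply: (@le_lt_trans _ _ (2 * `|t|)); last by lra.
apply: supdist_le => x; apply: le_trans (odist_le _ _ hm) _.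
by rewrite hdiff; exact: enorm_cst.
Qed.
End Dev.

Theorem lemma14 (R : realType) :
  (* (1) Sym(M) is isomorphic to O(2) as a Lie group (topological group iso) *)
  (exists F : aff R -> 'M[R]_2,
     [/\ forall f : aff R, inSym f -> (F f)^T *m F f = 1%:M,
         forall f g : aff R, inSym f -> inSym g -> (same_star f g <-> F f = F g),
         forall Q : 'M[R]_2, Q^T *m Q = 1%:M -> exists f : aff R, inSym f /\ F f = Q &
         forall f g : aff R, inSym f -> inSym g -> F (acomp f g) = F f *m F g] /\
     (forall f : aff R, inSym f -> forall e : R, 0 < e ->
           (exists2 d : R, 0 < d & forall g : aff R, inSym g -> supdist f g < d ->
             forall i j, `|F f i j - F g i j| < e)) /\
        (
         forall f : aff R, inSym f -> forall e : R, 0 < e ->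
           (exists2 d : R, 0 < d & forall g : aff R, inSym g ->
             (forall i j, `|F f i j - F g i j| < d) -> supdist f g < e))) /\
  (* (2) Sym(M) = Aff(M) *)
  (forall f : aff R, inNA f -> isometry_star f) /\
  (* (3) Omega maps {idt, (-I)_*} isomorphically onto Out(M) *)
  (inNA (aminusI R) /\
   ~ out_equiv (conjb (aminusI R)) id /\
   forall alpha : aff R -> aff R, is_autM alpha ->
     out_equiv alpha id \/ out_equiv alpha (conjb (aminusI R))).
Proof.
split.
  exists (@Fm R); split; [split | split].
  - by move=> f /inSym_NA; exact: Fm_orth.
  - by move=> f g /inSym_NA hf /inSym_NA hg; exact: same_Fm.
  - exact: Fm_surj.
  - by move=> f g /inSym_NA hf /inSym_NA hg; exact: Fm_mul.
  - move=> f /inSym_NA hf e he; have [d hd H] := cont1 hf he.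
    by exists d => // g /inSym_NA hg; exact: H.
  - move=> f /inSym_NA hf e he; have [d hd H] := cont2 hf he.
    by exists d => // g /inSym_NA hg; exact: H.
split; first exact: part2.
split; first exact: inNA_aminusI.
split; first exact: not_out_aminusI.
by move=> alpha ha; exact: auto_main ha.
Qed.
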